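(* For any positive integer $k$, as formal power series in $q$, $$\sum_{n=0}^{\infty}D_k(n)q^n=\sum_{n=0}^{\infty}q^{nk}(-q^{n+1};q)_\infty=2(-q;q)_\infty\sum_{j=0}^{k-1}(-1)^j(q^{k-j};q)_j+(-1)^k(q;q)_{k-1}.$$
   Context: $D_k(n)$ is the number of partitions of $n$ into non-negative parts (the part $0$ is allowed) in which the smallest part appears exactly $k$ times and no other part is repeated, with the convention $D_k(0)=1$. For $N\ge1$, $(a;q)_N=\prod_{i=0}^{N-1}(1-aq^i)$; also $(a;q)_0=1$ and $(a;q)_\infty=\lim_{N\to\infty}(a;q)_N$. *)

(* Defs.v *)
From mathcomp Require Import all_boot all_order all_algebra.
Set Implicit Arguments. Unset Strict Implicit. Unset Printing Implicit Defensive.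
Import GRing.Theory Num.Theory.
Local Open Scope ring_scope.

Definition minpart (s : seq nat) : nat := foldr minn (head 0%N s) s.

(* s (written as a nonincreasing list of its parts) is a partition of n into
   non-negative parts in which the smallest part appears exactly k times and
   no other part is repeated. *)
Definition Dk_part (k n : nat) (s : seq nat) : bool :=
  [&& sorted geq s, s != [::], sumn s == n,
      count_mem (minpart s) s == k &
      uniq (filter (fun x => x != minpart s) s)].

(* Every such partition (for k >= 1) has at most n + k parts, each <= n, so
   it occurs (exactly once) in the following duplicate-free enumeration. *)
Definition bounded_lists (n k : nat) : seq (seq nat) :=
  flatten [seq [seq map (@nat_of_ord n.+1) (tval t) | t <- enum {: L.-tuple 'I_n.+1}]
          | L <- iota 0 (n + k).+1].

Definition D (k n : nat) : nat :=
  if n == 0%N then 1%N else count (Dk_part k n) (bounded_lists n k).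

Definition ps := nat -> int.

Definition ps_of_poly (p : {poly int}) : ps := fun m => p`_m.

Definition psadd (f g : ps) : ps := fun m => f m + g m.
Definition psmul (f g : ps) : ps :=
  fun m => \sum_(i < m.+1) f i * g (m - i)%N.

(* Infinite sum \sum_{n>=0} F n, well defined when F n has order >= n
   (then only n <= m contributes to the coefficient of q^m). *)
Definition pssum (F : nat -> ps) : ps := fun m => \sum_(n < m.+1) F n m.

Definition qpoch (a : {poly int}) (N : nat) : {poly int} :=
  \prod_(i < N) (1 - a * 'X^i).

(* (a;q)_oo for a with zero constant term: the factors with i > m are
   1 + O(q^(m+1)), so the coefficient of q^m is that of (a;q)_(m+1). *)
Definition qpoch_inf (a : {poly int}) : ps := fun m => (qpoch a m.+1)`_m.

Definition D_gf (k : nat) : ps := fun n => (D k n)%:Z.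

(* Main.v *)
Require Import Defs.
From mathcomp Require Import all_boot all_order all_algebra.
From mathcomp Require Import ring zify.
Import GRing.Theory Num.Theory.
Local Open Scope ring_scope.
Set Implicit Arguments. Unset Strict Implicit. Unset Printing Implicit Defensive.

Definition eqm (m : nat) (p q : {poly int}) := exists r, p = q + 'X^(m.+1) * r.

Lemma eqm_refl m p : eqm m p p.
Proof. by exists 0; rewrite mulr0 addr0. Qed.

Lemma eqm_eq m p q : p = q -> eqm m p q.
Proof. by move=> ->; apply: eqm_refl. Qed.

Lemma eqm_sym m p q : eqm m p q -> eqm m q p.
Proof. by case=> r ->; exists (- r); ring. Qed.

Lemma eqm_trans m p q s : eqm m p q -> eqm m q s -> eqm m p s.
Proof. by case=> r -> [r' ->]; exists (r' + r); ring. Qed.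

Lemma eqm_add m p q p' q' : eqm m p q -> eqm m p' q' -> eqm m (p + p') (q + q').
Proof. by case=> r -> [r' ->]; exists (r + r'); ring. Qed.

Lemma eqm_mul m p q p' q' : eqm m p q -> eqm m p' q' -> eqm m (p * p') (q * q').
Proof. by case=> r -> [r' ->]; exists (r * q' + q * r' + r * 'X^(m.+1) * r'); ring. Qed.

Lemma eqm_opp m p q : eqm m p q -> eqm m (- p) (- q).
Proof. by case=> r ->; exists (- r); ring. Qed.

Lemma eqm_sub m p q p' q' : eqm m p q -> eqm m p' q' -> eqm m (p - p') (q - q').
Proof. by move=> h h'; apply: eqm_add => //; apply: eqm_opp. Qed.

Lemma eqm_X0 m a p : (m < a)%N -> eqm m ('X^a * p) 0.
Proof.
move=> ha; exists ('X^(a - m.+1) * p); rewrite add0r mulrA -exprD.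
by congr (_ ^+ _ * _); lia.
Qed.

Lemma eqm_coef m p q i : eqm m p q -> (i <= m)%N -> p`_i = q`_i.
Proof. by case=> r -> hi; rewrite coefD coefXnM ltnS hi addr0. Qed.

Lemma eqm_sum m n (F G : 'I_n -> {poly int}) :
  (forall i, eqm m (F i) (G i)) -> eqm m (\sum_(i < n) F i) (\sum_(i < n) G i).
Proof.
move=> h; apply: (big_ind2 (eqm m)) => //; first exact: eqm_refl.
by move=> *; apply: eqm_add.
Qed.

Lemma eqm_prod m n (F G : 'I_n -> {poly int}) :
  (forall i, eqm m (F i) (G i)) -> eqm m (\prod_(i < n) F i) (\prod_(i < n) G i).
Proof.
move=> h; apply: (big_ind2 (eqm m)) => //; first exact: eqm_refl.
by move=> *; apply: eqm_mul.
Qed.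

Definition Pn (m n : nat) : {poly int} := \prod_(i < m.+1) (1 + 'X^(n.+1 + i)).
Definition Tk (m k : nat) : {poly int} := \sum_(n < m.+1) 'X^(n * k) * Pn m n.
Definition Sk (k : nat) : {poly int} := \sum_(j < k) (-1) ^+ j * qpoch 'X^(k - j) j.

Lemma Pn_rec m n : eqm m (Pn m n) ((1 + 'X^(n.+1)) * Pn m n.+1).
Proof.
rewrite /Pn big_ord_recl big_ord_recr /= addn0.
set R := \prod_(i < m) _.
have -> : \prod_(i < m) (1 + 'X^(n.+2 + widen_ord (leqnSn m) i)) = R.
  by apply: eq_bigr => i _; rewrite /= /bump /= add1n addSnnS.
have -> : 'X^(n.+2 + m) = 'X^(m.+1) * 'X^(n.+1) :> {poly int}.
  by rewrite -exprD; congr (_ ^+ _); lia.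
exists (- ((1 + 'X^(n.+1)) * R * 'X^(n.+1))); ring.
Qed.

Lemma Pn_last m : eqm m (Pn m m) 1.
Proof.
apply: (@eqm_trans _ _ (\prod_(i < m.+1) (1 : {poly int}))); last by apply: eqm_eq; rewrite big1.
apply: eqm_prod => i; rewrite -[X in eqm _ _ X]addr0; apply: eqm_add; first exact: eqm_refl.
by rewrite -[X in eqm _ X _]mulr1; apply: eqm_X0; lia.
Qed.

Lemma XP m n : eqm m ('X^(n.+1) * Pn m n.+1) (Pn m n - Pn m n.+1).
Proof. by case: (Pn_rec m n) => r ->; exists (- r); ring. Qed.

Lemma T_rec m k : eqm m (Tk m k.+1)
  (2%:R * Pn m 0 + ('X^k - 1) * Tk m k - 'X^(m.+1 * k) * Pn m m).
Proof.
set A := \sum_(i < m) 'X^(i.+1 * k) * Pn m i.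
set B := \sum_(i < m) 'X^(i.+1 * k) * Pn m i.+1.
have h1 : eqm m (Tk m k.+1) (Pn m 0 + (A - B)).
  rewrite /Tk big_ord_recl /= mul0n expr0 mul1r; apply: eqm_add; first exact: eqm_refl.
  rewrite /A /B -sumrB; apply: eqm_sum => i.
  rewrite /bump /= add1n mulnSr exprD -mulrA -mulrBr.
  by apply: eqm_mul; [exact: eqm_refl | exact: XP].
have h2 : Tk m k = Pn m 0 + B.
  by rewrite /Tk big_ord_recl /= mul0n expr0 mul1r.
have h3 : 'X^k * Tk m k = A + 'X^(m.+1 * k) * Pn m m.
  rewrite /Tk big_ord_recr /= mulrDr big_distrr /= mulrA -exprD.
  congr (_ + _).
    by apply: eq_bigr => i _; rewrite mulrA -exprD mulSn.
apply: (eqm_trans h1); apply: eqm_eq.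
rewrite mulrBl h3 mul1r {1}h2; ring.
Qed.

Lemma qpochX_rec k : qpoch 'X k.+1 = qpoch 'X k * (1 - 'X^(k.+1)).
Proof. by rewrite /qpoch big_ord_recr /= exprS. Qed.

Lemma Sk_rec k : Sk k.+1 = 1 + ('X^k - 1) * Sk k.
Proof.
rewrite /Sk big_ord_recl /= subn0 expr0 mul1r /qpoch big_ord0; congr (_ + _).
rewrite big_distrr /=; apply: eq_bigr => i _.
rewrite /bump /= add1n subSS big_ord_recr /= -exprD subnK; last exact: ltnW.
rewrite exprS; ring.
Qed.

Lemma T_closed m k : (0 < k)%N ->
  eqm m (Tk m k) (2%:R * Pn m 0 * Sk k + (-1) ^+ k * qpoch 'X k.-1).
Proof.
case: k => // k _; elim: k => [|k IH].
  apply: (eqm_trans (T_rec m 0)).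
  rewrite /Sk big_ord1 /qpoch !big_ord0 expr0 subrr mul0r addr0 muln0 expr0 mul1r.
  apply: (@eqm_trans _ _ (2%:R * Pn m 0 - 1)); last by apply: eqm_eq; rewrite expr0 expr1; ring.
  apply: eqm_sub; first exact: eqm_refl.
  exact: Pn_last.
apply: (eqm_trans (T_rec m k.+1)).
rewrite -[X in eqm _ _ X]subr0; apply: eqm_sub; last first.
  by apply: eqm_X0; rewrite mulnS; lia.
apply: (@eqm_trans _ _ (2%:R * Pn m 0 + ('X^(k.+1) - 1) *
   (2%:R * Pn m 0 * Sk k.+1 + (-1) ^+ k.+1 * qpoch 'X k))).
  apply: eqm_add; first exact: eqm_refl.
  by apply: eqm_mul; [exact: eqm_refl | exact: IH].
apply: eqm_eq; rewrite /= (Sk_rec k.+1) qpochX_rec !exprS; ring.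
Qed.

Lemma qpoch_Pn m n : qpoch (- 'X^(n.+1)) m.+1 = Pn m n.
Proof. by apply: eq_bigr => i _; rewrite mulNr opprK -exprD. Qed.

Lemma qpoch_trunc j M d r : (r <= M)%N ->
  (qpoch (- 'X^(j.+1)) (M.+1 + d))`_r = (qpoch (- 'X^(j.+1)) M.+1)`_r.
Proof.
move=> hr; elim: d => [|d IH]; first by rewrite addn0.
rewrite addnS /qpoch big_ord_recr /= -/(qpoch _ _) mulNr opprK mulrDr mulr1 -exprD.
by rewrite coefD coefMXn ifT ?addr0 //; lia.
Qed.

Lemma qinf_coef m n r : (r <= m)%N -> qpoch_inf (- 'X^(n.+1)) r = (Pn m n)`_r.
Proof.
move=> hr; rewrite /qpoch_inf -qpoch_Pn.
have -> : m.+1 = (r.+1 + (m - r))%N by lia.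
by rewrite qpoch_trunc.
Qed.

Lemma pssum_T m k :
  pssum (fun n => psmul (ps_of_poly 'X^(n * k)) (qpoch_inf (- 'X^(n.+1)))) m = (Tk m k)`_m.
Proof.
rewrite /pssum /Tk coef_sum; apply: eq_bigr => n _; rewrite /psmul coefM.
by apply: eq_bigr => i _; rewrite /ps_of_poly (qinf_coef (m:=m)) // leq_subr.
Qed.

Lemma rhs_coef m k :
  psadd
      (psmul (fun m => 2 * qpoch_inf (- 'X) m)
             (ps_of_poly (\sum_(j < k) (-1) ^+ j * qpoch 'X^(k - j) j)))
      (ps_of_poly ((-1) ^+ k * qpoch 'X k.-1)) m
  = (2%:R * Pn m 0 * Sk k + (-1) ^+ k * qpoch 'X k.-1)`_m.
Proof.
rewrite /psadd coefD /ps_of_poly; congr (_ + _).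
rewrite /psmul coefM; apply: eq_bigr => i _.
rewrite -/(Sk k) (mulr_natl (Pn m 0)) coefMn -mulr_natl.
by rewrite (@qinf_coef m 0) ?mulr1 ?mulr_natl // -ltnS.
Qed.

Fixpoint subs (I : seq nat) : seq (seq nat) :=
  if I is x :: I' then map (cons x) (subs I') ++ subs I' else [:: [::]].

Lemma mem_subs I s : (s \in subs I) = subseq s I.
Proof.
elim: I s => [|x I IH] s /=.
  by case: s => [|y s]; rewrite mem_seq1.
rewrite mem_cat; case: s => [|y s] /=.
  by rewrite IH sub0seq orbT.
have injx : injective (cons x) by move=> a b [].
case: (eqVneq y x) => [->|nyx].
  rewrite (mem_map injx) !IH; apply/orb_idr => h.
  exact: subseq_trans (subseq_cons s x) h.
rewrite IH; have -> : (y :: s \in map (cons x) (subs I)) = false.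
  by apply/mapP => -[s' _ [e _]]; rewrite e eqxx in nyx.
by [].
Qed.

Lemma subs_uniq I : uniq I -> uniq (subs I).
Proof.
elim: I => [|x I IH] //= /andP[xI uI].
have injx : injective (cons x) by move=> a b [].
rewrite cat_uniq (map_inj_uniq injx) IH // andbT /=.
apply/hasPn => s sI; apply/mapP => -[s' s'I es].
rewrite es mem_subs in sI; move/negP: xI; apply.
exact: (mem_subseq sI (mem_head _ _)).
Qed.

Lemma prod_subs I :
  \prod_(x <- I) (1 + 'X^x) = \sum_(s <- subs I) 'X^(sumn s) :> {poly int}.
Proof.
elim: I => [|x I IH]; first by rewrite big_nil big_seq1 expr0.
rewrite big_cons IH /= big_cat big_map mulrDl mul1r big_distrr addrC /=.
by congr (_ + _); apply: eq_bigr => s _; rewrite exprD.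
Qed.

Lemma prod_iota (F : nat -> {poly int}) a N :
  \prod_(i < N) F (a + i)%N = \prod_(x <- iota a N) F x.
Proof.
elim: N a => [|N IH] a; first by rewrite big_ord0 big_nil.
rewrite big_ord_recl /= big_cons addn0 -IH; congr (_ * _).
by apply: eq_bigr => i _; rewrite /bump /= add1n addSnnS.
Qed.

Definition Iset m n := rev (iota n.+1 m.+1).

Lemma Pn_subs m n : Pn m n = \sum_(s <- subs (Iset m n)) 'X^(sumn s).
Proof.
by rewrite /Pn (prod_iota (fun x => 1 + 'X^x)) -prod_subs /Iset big_rev.
Qed.

Definition Lp m k : seq (seq nat) :=
  flatten [seq [seq s ++ nseq k n | s <- subs (Iset m n)] | n <- iota 0 m.+1].

Lemma Tk_Lp m k : Tk m k = \sum_(t <- Lp m k) 'X^(sumn t).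
Proof.
rewrite /Tk /Lp big_flatten big_map.
have -> : iota 0 m.+1 = index_iota 0 m.+1 by rewrite /index_iota subn0.
rewrite big_mkord.
apply: eq_bigr => n _; rewrite big_map Pn_subs big_distrr /=.
by apply: eq_bigr => s _; rewrite sumn_cat sumn_nseq -exprD addnC mulnC.
Qed.

Lemma coef_count (L : seq (seq nat)) m :
  (\sum_(t <- L) 'X^(sumn t) : {poly int})`_m = (count (fun t => sumn t == m) L)%:R.
Proof.
elim: L => [|t L IH]; first by rewrite big_nil coef0.
by rewrite big_cons coefD IH coefXn /= natrD eq_sym.
Qed.

Lemma flatten_uniq_key (T : eqType) (F : nat -> seq T) (key : T -> nat) ns :
  uniq ns -> (forall n, uniq (F n)) -> (forall n x, x \in F n -> key x = n) ->
  uniq (flatten (map F ns)).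
Proof.
move=> + hu hk; elim: ns => //= n ns IH /andP[nn uns].
rewrite cat_uniq hu IH // andbT /=.
apply/hasPn => x /flatten_mapP [n' n'ns xF']; apply/negP => xF.
move: nn; rewrite -(hk _ _ xF) (hk _ _ xF') n'ns //.
Qed.

Lemma BL_uniq m k : uniq (bounded_lists m k).
Proof.
apply: (@flatten_uniq_key _ _ size); first exact: iota_uniq.
  move=> L; rewrite map_inj_uniq ?enum_uniq //.
  by move=> t1 t2 /(inj_map val_inj) /val_inj.
by move=> L x /mapP [t _ ->]; rewrite size_map size_tuple.
Qed.

Lemma last_nseqk k (n a : nat) : (0 < k)%N -> last a (nseq k n) = n.
Proof. by case: k => // k _ /=; elim: k. Qed.

Lemma Lp_uniq m k : (0 < k)%N -> uniq (Lp m k).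
Proof.
move=> hk; apply: (@flatten_uniq_key _ _ (last 0%N)); first exact: iota_uniq.
  move=> n; rewrite map_inj_uniq ?subs_uniq ?rev_uniq ?iota_uniq //.
  move=> s1 s2 e; have := congr1 size e; rewrite !size_cat => /addIn hs.
  by move/eqP: e; rewrite eqseq_cat // => /andP[/eqP].
by move=> n x /mapP [s _ ->]; rewrite last_cat last_nseqk.
Qed.

Lemma foldr_min_le (a : nat) t x : x \in a :: t -> (foldr minn a t <= x)%N.
Proof.
elim: t x => [|y t IH] x /=; first by rewrite mem_seq1 => /eqP ->.
rewrite !inE => /or3P [/eqP ->|/eqP ->|xt].
- by apply: leq_trans (geq_minr _ _) _; apply: IH; rewrite mem_head.
- exact: geq_minl.
- by apply: leq_trans (geq_minr _ _) _; apply: IH; rewrite inE xt orbT.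
Qed.

Lemma foldr_min_mem (a : nat) t : foldr minn a t \in a :: t.
Proof.
elim: t => [|y t IH] /=; first by rewrite mem_head.
rewrite /minn; case: ifP => _; first by rewrite !inE eqxx orbT.
by move: IH; rewrite !inE => /orP [->|->]; rewrite ?orbT.
Qed.

Lemma minpart_le t x : x \in t -> (minpart t <= x)%N.
Proof.
case: t => [|y t] // xt; change (foldr minn y (y :: t) <= x)%N.
by apply: foldr_min_le; rewrite inE xt orbT.
Qed.

Lemma minpart_mem t : t != [::] -> minpart t \in t.
Proof.
case: t => [|y t] // _; change (foldr minn y (y :: t) \in y :: t).
have := foldr_min_mem y (y :: t).
by rewrite inE => /orP [/eqP ->|]; rewrite ?mem_head.
Qed.

Lemma sumn_ge x t : x \in t -> (x <= sumn t)%N.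
Proof.
elim: t => [|y t IH] //=; rewrite inE => /orP [/eqP ->|/IH]; first exact: leq_addr.
by move=> h; apply: leq_trans h (leq_addl _ _).
Qed.

Lemma size_le_sumn s : all (fun x => 0 < x)%N s -> (size s <= sumn s)%N.
Proof. by elim: s => [|y s IH] //= /andP [hy /IH]; lia. Qed.

Lemma geq_trans : transitive geq.
Proof. by move=> a b c h1 h2; exact: leq_trans h2 h1. Qed.

Lemma gtn_trans : transitive gtn.
Proof. by move=> a b c h1 h2; exact: ltn_trans h2 h1. Qed.

Lemma sorted_geq_gtn s : sorted geq s -> uniq s -> sorted gtn s.
Proof.
case: s => // x s; elim: s x => //= y s IH x /andP [xy ps] /andP [nx us].
rewrite IH // andbT ltn_neqAle xy andbT.
by move: nx; rewrite inE negb_or eq_sym => /andP [].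
Qed.

Lemma pairwise_nseq k (n : nat) : pairwise geq (nseq k n).
Proof. by elim: k => //= k ->; rewrite andbT all_nseq /= leqnn orbT. Qed.

Lemma sorted_cat_nseq s k n :
  sorted geq s -> all (fun x => n <= x)%N s -> sorted geq (s ++ nseq k n).
Proof.
move=> ss hs; rewrite sorted_pairwise; last exact: geq_trans.
rewrite pairwise_cat pairwise_nseq andbT -sorted_pairwise ?ss; last exact: geq_trans.
rewrite andbT; apply/allP => x xs; apply/allP => y; rewrite mem_nseq => /andP [_ /eqP ->].
exact: (allP hs x xs).
Qed.

Lemma Iset_mem m n x : (x \in Iset m n) = (n < x <= n + m.+1)%N.
Proof. by rewrite /Iset mem_rev mem_iota; lia. Qed.

Lemma Iset_sorted m n : sorted gtn (Iset m n).
Proof. by rewrite /Iset rev_sorted; exact: iota_ltn_sorted. Qed.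

Lemma filter_pred1_nseq (x : nat) s : filter (pred1 x) s = nseq (count_mem x s) x.
Proof.
elim: s => //= y s ->; case: (eqVneq y x) => [->|]; by rewrite ?eqxx.
Qed.

Lemma Dk_decomp k m t : (0 < k)%N -> Dk_part k m t ->
  [/\ t = filter (fun x => x != minpart t) t ++ nseq k (minpart t),
      (minpart t <= m)%N,
      subseq (filter (fun x => x != minpart t) t) (Iset m (minpart t)),
      all (fun x => minpart t < x)%N (filter (fun x => x != minpart t) t)
    & sumn t = m].
Proof.
move=> hk /and5P [st tn /eqP sm /eqP cn us].
set n := minpart t in cn us *; set s := filter (fun x => x != n) t in us *.
have nt : n \in t := minpart_mem tn.
have nm : (n <= m)%N by rewrite -sm; exact: sumn_ge.
have sall : all (fun x => n < x)%N s.
  apply/allP => x; rewrite mem_filter => /andP [xn xt].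
  by rewrite ltn_neqAle eq_sym xn minpart_le.
have sm_ : forall x, x \in s -> (x <= m)%N.
  by move=> x; rewrite mem_filter => /andP [_ xt]; rewrite -sm; exact: sumn_ge.
have ss : sorted geq s := sorted_filter geq_trans _ st.
have asym : antisymmetric geq.
  by move=> a b /andP [h1 h2]; apply/anti_leq/andP; split.
have sall' : all (fun x => n <= x)%N s.
  by apply: sub_all sall => x /ltnW.
have e : t = s ++ nseq k n.
  apply: (sorted_eq geq_trans asym st (sorted_cat_nseq k ss sall')).
  have h := permEl (perm_filterC (fun x => x != n) t).
  rewrite perm_sym; apply: perm_trans h.
  have -> : filter (predC (fun x => x != n)) t = nseq k n.
    rewrite -cn -filter_pred1_nseq; apply: eq_filter => x /=.
    by rewrite negbK.
  exact: perm_refl.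
split => //.
have sg : sorted gtn s := sorted_geq_gtn ss us.
have irr : irreflexive gtn by move=> x; exact: ltnn.
clearbody s; have -> : s = filter (mem s) (Iset m n).
  apply: (irr_sorted_eq gtn_trans irr sg (sorted_filter gtn_trans _ (Iset_sorted m n))).
  move=> x; rewrite mem_filter; case xs: (x \in s) => //=.
  rewrite Iset_mem (allP sall x xs) /=; have := sm_ x xs; lia.
  by rewrite xs.
exact: filter_subseq.
Qed.

Lemma Dk_char k m t : (0 < k)%N ->
  Dk_part k m t = (sumn t == m) && (t \in Lp m k).
Proof.
move=> hk; apply/idP/idP.
  move=> h; have [e nm sub sall sm] := Dk_decomp hk h.
  rewrite sm eqxx /=; apply/flatten_mapP; exists (minpart t).
    by rewrite mem_iota; lia.
  by apply/mapP; exists (filter (fun x => x != minpart t) t); rewrite ?mem_subs.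
case/andP => /eqP sm /flatten_mapP [n nI /mapP [s sI et]].
rewrite et in sm *; rewrite mem_subs in sI.
have sall : all (fun x => n < x)%N s.
  by apply/allP => x /(mem_subseq sI); rewrite Iset_mem => /andP [].
have us : uniq s by apply: subseq_uniq sI _; rewrite /Iset rev_uniq iota_uniq.
have ss : sorted geq s.
  apply: (subseq_sorted geq_trans sI).
  have hsub : subrel gtn geq by move=> a b /ltnW.
  exact: (sub_sorted hsub (Iset_sorted m n)).
have sall' : all (fun x => n <= x)%N s by apply: sub_all sall => x /ltnW.
have tn : s ++ nseq k n != [::].
  by rewrite -size_eq0 size_cat size_nseq; lia.
have mp : minpart (s ++ nseq k n) = n.
  have nt : n \in s ++ nseq k n by rewrite mem_cat mem_nseq hk eqxx orbT.
  apply/anti_leq; rewrite minpart_le //=.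
  have := minpart_mem tn; rewrite mem_cat mem_nseq.
  by case/orP => [/(allP sall)/ltnW|/andP [_ /eqP ->]].
rewrite /Dk_part mp sorted_cat_nseq // tn sm eqxx /=.
rewrite count_cat count_nseq /= eqxx mul1n.
have -> : count_mem n s = 0%N.
  by apply/count_memPn/negP => /(allP sall); rewrite ltnn.
rewrite add0n eqxx /= filter_cat filter_nseq /= eqxx mul0n cats0.
have -> : filter (fun x => x != n) s = s.
  by apply/all_filterP; apply: sub_all sall => x /gtn_eqF ->.
exact: us.
Qed.

Lemma BL_cover k m t : (0 < k)%N -> Dk_part k m t -> t \in bounded_lists m k.
Proof.
move=> hk h; have [e nm sub sall sm] := Dk_decomp hk h.
apply/flatten_mapP; exists (size t).
  rewrite mem_iota add0n ltnS e size_cat size_nseq leq_add2r.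
  apply: leq_trans (size_le_sumn _) _.
    by apply: sub_all sall => x; apply: leq_ltn_trans.
  by have := congr1 sumn e; rewrite sumn_cat sm; lia.
apply/mapP; exists (map_tuple (@inord m) (in_tuple t)); first by rewrite mem_enum.
rewrite /= -map_comp map_id_in // => x xt /=.
by rewrite inordK // ltnS -sm; exact: sumn_ge.
Qed.

Lemma D_count k m : (0 < k)%N ->
  count (Dk_part k m) (bounded_lists m k) = count (fun t => sumn t == m) (Lp m k).
Proof.
move=> hk; rewrite -!size_filter; apply/perm_size/uniq_perm.
- exact/filter_uniq/BL_uniq.
- exact/filter_uniq/Lp_uniq.
move=> t; rewrite !mem_filter /= -Dk_char //.
by apply/andP/idP => [[] //|h]; split => //; exact: BL_cover.
Qed.

From Stdlib Require Import FunctionalExtensionality.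
Unset Implicit Arguments.

Theorem theorem10 (k : nat) (hk : (0 < k)%N) :
  D_gf k =
    pssum (fun n => psmul (ps_of_poly 'X^(n * k)) (qpoch_inf (- 'X^(n.+1))))
  /\
  pssum (fun n => psmul (ps_of_poly 'X^(n * k)) (qpoch_inf (- 'X^(n.+1)))) =
    psadd
      (psmul (fun m => 2 * qpoch_inf (- 'X) m)
             (ps_of_poly (\sum_(j < k) (-1) ^+ j * qpoch 'X^(k - j) j)))
      (ps_of_poly ((-1) ^+ k * qpoch 'X k.-1)).
Proof.
split; apply: functional_extensionality => m; rewrite pssum_T.
  rewrite /D_gf /D; case: m => [|m] /=.
    rewrite /Tk big_ord1 mul0n expr0 mul1r /Pn big_ord1 addn0 coefD coef1 coefXn.
    by [].
  by rewrite D_count // Tk_Lp coef_count natz.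
rewrite rhs_coef; exact: (eqm_coef (T_closed m hk) (leqnn m)).
Qed.
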